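(* Let $T$ be a combinatorial 4-PPT and let $H$ be a subgraph of $T$ with $|V(H)|\ge 3$. Then $H$ has at least $3$ vertices whose reflex angle (in $T$) is contained in the outer face of $H$.
   Context: An angle of a plane embedded graph is a vertex–face incidence. A combinatorial pseudo-triangulation is a combinatorial embedding in the plane (rotation system with designated outer face) of a connected planar simple graph, with a tag ''reflex'' or ''convex'' on each angle, such that every interior face has exactly three convex angles, all angles of the outer face are reflex, and no vertex is incident to more than one reflex angle; it is pointed if every vertex is incident to exactly one reflex angle. A combinatorial 4-PPT is a combinatorial pointed pseudo-triangulation whose interior faces all have size 3 or 4. The subgraph $H$ inherits the embedding of $T$; each vertex of $H$ has exactly one reflex angle in $T$, which lies in some face of $H$. *)

(* Defs.v *)
From mathcomp Require Import all_boot.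
Set Implicit Arguments. Unset Strict Implicit. Unset Printing Implicit Defensive.

(* Conventions:
   - D : darts (half-edges), V : vertices; [tail d] is the vertex d leaves.
   - [alpha] : the fixed-point-free involution reversing a dart.
   - [sigma] : rotation system: sigma d is the next dart around tail d.
   - [phi d := sigma (alpha d)] : face permutation; faces = phi-orbits.
   - Angles are identified with darts: dart d represents the angle (corner)
     at vertex [tail d] between [sigma^-1 d] and [d]; this angle lies in
     the face (phi-orbit) of d.  Every vertex-face incidence (with
     multiplicity) is obtained exactly once this way.
   - The outer face is designated by a dart [o] lying on it. *)

Section Maps.
Variables (D V : finType) (tail : D -> V) (alpha sigma : D -> D).

Definition phi (d : D) : D := sigma (alpha d).

Definition adj : rel V :=
  fun u v => [exists d, (tail d == u) && (tail (alpha d) == v)].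

(* A combinatorial embedding in the plane of a connected graph:
   rotation system + Euler's formula V - E + F = 2 (genus 0). *)
Definition plane_map : Prop :=
  [/\ injective sigma /\ (forall d, alpha (alpha d) = d),
      (forall d, alpha d != d),
      (forall d e, fconnect sigma d e = (tail d == tail e)),
      (forall v, exists d, tail d = v)
    & (forall u v, connect adj u v) /\ #|V| + fcard phi D = #|D|./2 + 2].

Definition simple_map : Prop :=
  (forall d, tail (alpha d) != tail d) /\
  (forall d e, tail d = tail e -> tail (alpha d) = tail (alpha e) -> d = e).

Definition same_face (d e : D) : bool := fconnect phi d e.

Definition comb_pointed_PT (reflex : pred D) (o : D) : Prop :=
  [/\ (forall d, ~~ same_face o d ->
          #|[set e | same_face d e & ~~ reflex e]| = 3),
      (forall d, same_face o d -> reflex d)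
    & (forall v, #|[set d | (tail d == v) & reflex d]| = 1)].

Definition comb_4PPT (reflex : pred D) (o : D) : Prop :=
  [/\ plane_map, simple_map, comb_pointed_PT reflex o
    & (forall d, ~~ same_face o d -> (order phi d == 3) || (order phi d == 4))].

Definition subgraph (VH : {set V}) (EH : {set D}) : Prop :=
  forall d, d \in EH -> (alpha d \in EH) && (tail d \in VH).

(* Faces of H (with the embedding inherited from T) are the classes of faces
   of T glued across the edges of T that are not in H (vertices of T not in
   H have all their edges outside H, so they are covered as well). *)
Definition hstep (EH : {set D}) : rel D :=
  fun d e => [|| e == phi d, d == phi e | (d \notin EH) && (e == alpha d)].

Definition same_Hface (EH : {set D}) (d e : D) : bool := connect (hstep EH) d e.

Definition reflex_in_outer_H (reflex : pred D) (o : D) (EH : {set D}) (v : V)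
  : bool := [exists d, [&& tail d == v, reflex d & same_Hface EH o d]].

End Maps.

(* Main.v *)
Require Import Defs.
From mathcomp Require Import all_boot.
From mathcomp Require Import all_fingroup zify.
Set Implicit Arguments. Unset Strict Implicit. Unset Printing Implicit Defensive.

Section Gen.
Variables (T : finType) (f : T -> T).
Hypothesis finj : injective f.

Let fsym : connect_sym (frel f) := fconnect_sym finj.

Lemma SR (A P : {pred T}) : fclosed f A ->
  #|[predI A & P]| = \sum_(r in [predI froots f & A]) #|[predI fconnect f r & P]|.
Proof.
move=> clA.
rewrite -sum1_card (partition_big (froot f) [predI froots f & A]) /=.
  apply: eq_bigr => r /andP[rr rA]; rewrite -sum1_card; apply: eq_bigl => x /=.
  rewrite !inE /=.
  have -> : (froot f x == r) = fconnect f r x.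
    by rewrite -{1}(eqP rr) (root_connect fsym) fsym.
  case hrx: (fconnect f r x); last by rewrite !andbF.
  by rewrite andbT -(closed_connect clA hrx) rA.
move=> x /andP[xA _]; rewrite !inE (roots_root fsym) /=.
by rewrite -(closed_connect clA (connect_root _ x)).
Qed.

Lemma CLS (A : {pred T}) : fclosed f A ->
  fcard f A = #|[set [set y | fconnect f x y] | x in A]|.
Proof.
move=> clA.
have -> : [set [set y | fconnect f x y] | x in A] =
          [set [set y | fconnect f x y] | x in [predI froots f & A]].
  apply/setP=> S; apply/imsetP/imsetP => [[x xA ->]|[x /andP[_ xA] ->]].
    exists (froot f x).
      apply/andP; split; first exact: (roots_root fsym).
      by rewrite -(closed_connect clA (connect_root _ x)).
    by apply/setP=> y; rewrite !inE; apply: same_connect => //; apply: connect_root.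
  by exists x.
rewrite card_in_imset /n_comp_mem //.
move=> x y /andP[rx _] /andP[ry _] /setP e.
have := e y; rewrite !inE connect0 => hxy.
by rewrite -(eqP rx) -(eqP ry); apply/(rootP fsym).
Qed.

Lemma orbit_inv (x y : T) : f (f x) = x ->
  fconnect f x y = (y == x) || (y == f x).
Proof.
move=> fK; apply/idP/idP.
  move/iter_findex => <-; elim: (findex f x y) => [|n /= /orP[] /eqP->].
  - by rewrite eqxx.
  - by rewrite eqxx orbT.
  - by rewrite fK eqxx.
by case/orP=> /eqP->; [apply: connect0 | apply: fconnect1].
Qed.

End Gen.

Section Transfer.
Variables (T : finType) (f : T -> T) (A : {pred T}).
Hypothesis finj : injective f.
Hypothesis clA : fclosed f A.
Variable p : {perm {x : T | x \in A}}.
Hypothesis pE : forall z, val (p z) = f (val z).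

Lemma val_iter i z : val ((p ^+ i)%g z) = iter i f (val z).
Proof.
elim: i => [|i IH]; first by rewrite expg0 perm1.
by rewrite expgSr permM pE IH.
Qed.

Lemma val_porbit z : val @: porbit p z = [set y | fconnect f (val z) y].
Proof.
apply/setP=> y; rewrite inE; apply/imsetP/idP => [[w /porbitP[i ->] ->]|].
  by rewrite val_iter fconnect_iter.
move/iter_findex => hy.
have yA : y \in A.
  by rewrite -hy -(closed_connect clA (fconnect_iter f _ (val z))) (valP z).
by exists ((p ^+ (findex f (val z) y))%g z); rewrite ?mem_porbit // val_iter.
Qed.

Lemma porbits_fcard : #|porbits p| = fcard f A.
Proof.
rewrite (CLS finj clA) -(card_imset (porbits p) (imset_inj val_inj)).
apply: eq_card => S; apply/imsetP/imsetP.
  case=> S' /imsetP[z _ ->] ->; exists (val z); first exact: valP.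
  exact: val_porbit.
case=> x xA ->; exists (porbit p (Sub x xA)); first exact: imset_f.
by rewrite val_porbit.
Qed.
End Transfer.

Section Restr.
Variables (T : finType) (f : T -> T) (A : {pred T}).
Hypothesis finj : injective f.
Hypothesis clA : forall x, x \in A -> f x \in A.
Definition restr (z : {x : T | x \in A}) : {x : T | x \in A} :=
  exist _ (f (val z)) (clA (valP z)).
Lemma restr_inj : injective restr.
Proof. by move=> x y /(congr1 val) /finj /val_inj. Qed.
Definition rperm : {perm {x : T | x \in A}} := perm restr_inj.
Lemma rpermE z : val (rperm z) = f (val z).
Proof. by rewrite permE. Qed.
End Restr.


Lemma ar1 (pa pa' pb pb' : nat) : pa' + 2 = pa + 1 -> pb + 1 = pb' -> pa + pb = pa' + pb'.
Proof. lia. Qed.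

Section PermG.
Variable X : finType.
Implicit Types (a b s : {perm X}).
Local Open Scope group_scope.

Lemma porbit_fixed s y : s y = y -> porbit s y = [set y].
Proof.
move=> sy; apply/setP=> z; rewrite inE; apply/porbitP/eqP => [[i ->]|->];
  last by exists 0%N; rewrite expg0 perm1.
elim: i => [|i IH]; first by rewrite expg0 perm1.
by rewrite expgSr permM IH sy.
Qed.

Lemma closed_porbit s (S : {set X}) z :
  (forall x, x \in S -> s x \in S) -> z \in S -> porbit s z \subset S.
Proof.
move=> cl zS; apply/subsetP=> y /porbitP[i ->].
elim: i => [|i IH]; first by rewrite expg0 perm1.
by rewrite expgSr permM; apply: cl.
Qed.

Lemma card_porbits1 : #|porbits (1 : {perm X})| = #|X|.
Proof.
rewrite /porbits (eq_imset _ (fun x => porbit_fixed (perm1 x))).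
by rewrite card_imset //; apply: set1_inj.
Qed.

Definition mv b := #|[set x | b x != x]|.

Section Peel.
Variables (b : {perm X}) (x : X).
Hypothesis bK : forall z, b (b z) = z.
Hypothesis bx : b x != x.
Let y := b x.
Let t := tperm x y.
Definition bpeel := t * b.

Lemma bpeelE z : bpeel z = b (t z). Proof. by rewrite permM. Qed.
Lemma bpeel_x : bpeel x = x. Proof. by rewrite bpeelE tpermL bK. Qed.
Lemma bpeel_y : bpeel y = y. Proof. by rewrite bpeelE tpermR. Qed.
Lemma bpeel_other z : z != x -> z != y -> bpeel z = b z.
Proof. by move=> zx zy; rewrite bpeelE tpermD // eq_sym. Qed.

Lemma xy_neq : x != y. Proof. by rewrite eq_sym. Qed.

Lemma bpeelK z : bpeel (bpeel z) = z.
Proof.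
case: (eqVneq z x) => [->|zx]; first by rewrite !bpeel_x.
case: (eqVneq z y) => [->|zy]; first by rewrite !bpeel_y.
have bzx : b z != x.
  by apply: contra_neq zy => /(congr1 b); rewrite bK.
have bzy : b z != y.
  by apply: contra_neq zx => bzy; apply: (@perm_inj _ b); rewrite bzy.
by rewrite (bpeel_other zx zy) (bpeel_other bzx bzy) bK.
Qed.

Lemma b_peel : b = t * bpeel.
Proof. by rewrite /bpeel mulgA tperm2 mul1g. Qed.

Lemma mv_peel : mv bpeel < mv b.
Proof.
apply: proper_card; apply/properP; split.
  apply/subsetP=> z; rewrite !inE => hz.
  have zx : z != x by apply: contra_neq hz => ->; rewrite bpeel_x.
  have zy : z != y by apply: contra_neq hz => ->; rewrite bpeel_y.
  by rewrite -bpeel_other.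
by exists x; rewrite !inE ?bx // bpeel_x eqxx.
Qed.

Lemma peel_comm : t * bpeel = bpeel * t.
Proof.
apply/permP=> z; rewrite (permM t bpeel) (permM bpeel t).
case: (eqVneq z x) => [->|zx]; first by rewrite bpeel_x tpermL bpeel_y.
case: (eqVneq z y) => [->|zy]; first by rewrite bpeel_y tpermR bpeel_x.
rewrite (tpermD (x:=x) (y:=y)) ?(eq_sym x) ?(eq_sym y) //.
have hbz : bpeel z = b z by rewrite bpeel_other.
rewrite hbz tpermD //.
  apply: contra_neq zy => bzx; apply: (@perm_inj _ b); by rewrite -bzx /y bK.
apply: contra_neq zx => bzy; by rewrite -(bK z) -bzy /y bK.
Qed.

Lemma porbits_peel : #|porbits b| + 1 = #|porbits bpeel|.
Proof.
have := porbits_mul_tperm bpeel x y.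
rewrite /= -b_peel porbit_fixed ?bpeel_y // inE xy_neq /=.
by move=> h; apply/eqP; rewrite -(eqn_add2r 1) -addnA /= h.
Qed.
End Peel.

Lemma perm_eq1 b : (forall z, b z = z) -> b = 1.
Proof. by move=> h; apply/permP=> z; rewrite perm1 h. Qed.

Lemma W_le b a : (forall z, b (b z) = z) ->
  #|porbits b| + #|porbits (b * a)| <= #|porbits a| + #|X|.
Proof.
move: {2}(mv b) (leqnn (mv b)) => n; elim: n b => [|n IH] b hn bK.
all: case: (pickP [pred z | b z != z]) => [x /= bx|hb].
2,4: have -> : b = 1 by apply: perm_eq1 => z; apply/eqP; move: (hb z) => /= /negbFE.
2,3: by rewrite mul1g card_porbits1 addnC.
- have : 0 < mv b by apply/card_gt0P; exists x; rewrite inE.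
  by rewrite lt0n -leqn0 hn.
- have hb' : mv (bpeel b x) <= n by rewrite -ltnS (leq_trans (mv_peel bK bx) hn).
  have IH' := IH _ hb' (@bpeelK b x bK).
  have h1 := porbits_mul_tperm (bpeel b x * a) x (b x).
  rewrite /= mulgA -b_peel // (xy_neq bx) in h1.
  have h2 := @porbits_peel b x bx.
  move: h1; set k := (_ .*2) => h1.
  have h1' : #|porbits (b * a)| <= #|porbits (bpeel b x * a)| + 1.
    by apply: (leq_trans (leq_addr k _)); rewrite h1.
  apply: leq_trans (leq_add (leqnn _) h1') _.
  by rewrite addnA addnAC h2.
Qed.

Definition ptrans a b := forall S : {set X},
  (forall z, z \in S -> a z \in S) -> (forall z, z \in S -> b z \in S) ->
  S = set0 \/ S = setT.

Lemma G_caseB b a : (forall z, b (b z) = z) -> ptrans a b ->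
  (forall z, b z \in porbit a z) ->
  #|porbits a| + #|porbits b| + #|porbits (b * a)| <= #|X| + 2.
Proof.
move=> bK htr hb.
have pX : forall z, porbit a z = setT.
  move=> z.
  have hcl1 : forall w, w \in porbit a z -> a w \in porbit a z.
    move=> w hw; have e : porbit a w = porbit a z by apply/eqP; rewrite eq_porbit_mem.
    by have := mem_porbit a 1 w; rewrite expg1 e.
  have hcl2 : forall w, w \in porbit a z -> b w \in porbit a z.
    move=> w hw; have e : porbit a w = porbit a z by apply/eqP; rewrite eq_porbit_mem.
    by rewrite -e.
  have [h0|//] := htr _ hcl1 hcl2.
  by have := porbit_id a z; rewrite h0 inE.
have hpa : #|porbits a| <= 1.
  rewrite -(cards1 (setT : {set X})); apply: subset_leq_card.
  by apply/subsetP=> S /imsetP[z _ ->]; rewrite pX inE.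
have h := W_le a bK.
rewrite -addnA; apply: leq_trans (leq_add hpa h) _.
by rewrite addnA addnC leq_add2l add1n ltnS.
Qed.

Lemma G_le b a : (forall z, b (b z) = z) -> ptrans a b ->
  #|porbits a| + #|porbits b| + #|porbits (b * a)| <= #|X| + 2.
Proof.
move: {2}(mv b) (leqnn (mv b)) => n; elim: n b a => [|n IH] b a hn bK htr.
all: case: (pickP [pred z | b z \notin porbit a z]) => [x /= bx|hb];
  last by apply: G_caseB => // z; move: (hb z) => /= /negbFE.
all: have bx' : b x != x by apply: contraNneq bx => ->; exact: porbit_id.
- have : 0 < mv b by apply/card_gt0P; exists x; rewrite inE.
  by rewrite lt0n -leqn0 hn.
- pose t : {perm X} := tperm x (b x).
  pose b' : {perm X} := bpeel b x.
  pose a' : {perm X} := t * a.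
  have hb' : mv b' <= n by rewrite -ltnS (leq_trans (mv_peel bK bx') hn).
  have xy : x != b x by rewrite eq_sym.
  have cnt_a : #|porbits a'| + 2 = #|porbits a| + 1.
    by have := porbits_mul_tperm a x (b x); rewrite /= xy porbit_sym bx.
  have xa'y : x \in porbit a' (b x).
    have := porbits_mul_tperm a' x (b x); rewrite /= xy.
    have -> : tperm x (b x) * a' = a by rewrite /a' /t mulgA tperm2 mul1g.
    move=> h; apply/negPn/negP => hn'; move: h; rewrite hn' /= => h.
    have h' : #|porbits a| + 2 = #|porbits a'| + 1 := h.
    have : #|porbits a| + 2 + 2 = #|porbits a| + 1 + 1.
      by rewrite h' -cnt_a -!addnA.
    by rewrite -!addnA; move/eqP; rewrite eqn_add2l.
  have ba : b * a = b' * a'.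
    by rewrite {1}(b_peel b x) (peel_comm x bK) -mulgA.
  have htr' : ptrans a' b'.
    move=> S cla clb.
    have tS : forall z, z \in S -> t z \in S.
      move=> z zS; case: (eqVneq z x) => [ezx|zx].
        subst z; rewrite /t tpermL; apply: (subsetP (closed_porbit cla zS)).
        by rewrite porbit_sym.
      case: (eqVneq z (b x)) => [ezy|zy].
        subst z; rewrite /t tpermR; exact: (subsetP (closed_porbit cla zS)).
      by rewrite /t tpermD // eq_sym.
    apply: htr => z zS.
      have -> : a z = a' (t z) by rewrite /a' permM /t tpermK.
      exact/cla/tS.
    have -> : b z = b' (t z) by rewrite {1}(b_peel b x) permM.
    exact/clb/tS.
  have := IH b' a' hb' (@bpeelK b x bK) htr'.
  have := @porbits_peel b x bx'.
  rewrite ba -/b' => hpb hIH.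
  have e : #|porbits a| + #|porbits b| = #|porbits a'| + #|porbits b'|.
    by apply: ar1.
  by rewrite e.
Qed.
End PermG.

Lemma arith (nV fO FI Dh Dn On In QI NI hO cB cO tau u : nat) :
  nV + (fO + FI) = Dh + 2 -> Dn = 2 * Dh -> Dn = On + In -> In = QI + NI ->
  NI = 3 * FI -> QI <= FI -> On + hO = 2 * cB -> fO + cB + cO <= On + 2 ->
  nV = tau + u + QI -> u + 1 <= cO -> 3 <= hO -> 3 <= tau.
Proof. lia. Qed.

Section Main.
Variables (D V : finType) (tail : D -> V) (alpha sigma : D -> D)
    (reflex : pred D) (o : D) (VH : {set V}) (EH : {set D}).
Hypothesis sig_inj : injective sigma.
Hypothesis alphaK : forall d, alpha (alpha d) = d.
Hypothesis alpha_neq : forall d, alpha d != d.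
Hypothesis sig_conn : forall d e, fconnect sigma d e = (tail d == tail e).
Hypothesis adj_conn : forall u v, connect (adj tail alpha) u v.
Hypothesis euler : #|V| + fcard (phi alpha sigma) D = #|D|./2 + 2.
Hypothesis simp1 : forall d, tail (alpha d) != tail d.
Hypothesis simp2 : forall d e, tail d = tail e -> tail (alpha d) = tail (alpha e) -> d = e.
Hypothesis pt1 : forall d, ~~ same_face alpha sigma o d ->
          #|[set e | same_face alpha sigma d e & ~~ reflex e]| = 3.
Hypothesis pt3 : forall v, #|[set d | (tail d == v) & reflex d]| = 1.
Hypothesis sz : forall d, ~~ same_face alpha sigma o d ->
   (fingraph.order (phi alpha sigma) d == 3) || (fingraph.order (phi alpha sigma) d == 4).
Hypothesis sub : subgraph tail alpha VH EH.
Hypothesis hVH : 3 <= #|VH|.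

Notation ph := (phi alpha sigma).
Definition Op : pred D := [pred d | same_Hface alpha sigma EH o d].
Definition alpha' d := if d \in EH then d else alpha d.
Definition psi d := ph (alpha' d).

Lemma alpha_inj : injective alpha. Proof. exact: can_inj alphaK. Qed.
Lemma ph_inj : injective ph.
Proof. by move=> x y /sig_inj /alpha_inj. Qed.
Lemma sigmaE d : sigma d = ph (alpha d).
Proof. by rewrite /phi alphaK. Qed.
Lemma EH_alpha d : (alpha d \in EH) = (d \in EH).
Proof.
apply/idP/idP => h; first by rewrite -(alphaK d); case/andP: (sub h).
by case/andP: (sub h).
Qed.
Lemma EH_VH d : d \in EH -> tail d \in VH.
Proof. by move/sub/andP=> []. Qed.
Lemma alpha'K d : alpha' (alpha' d) = d.
Proof.
rewrite /alpha'; case hd: (d \in EH); first by rewrite hd.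
by rewrite EH_alpha hd alphaK.
Qed.
Lemma alpha'_inj : injective alpha'. Proof. exact: can_inj alpha'K. Qed.
Lemma psi_inj : injective psi.
Proof. by move=> x y /ph_inj /alpha'_inj. Qed.

Lemma hstep_sym : symmetric (hstep alpha sigma EH).
Proof.
move=> d e; rewrite /hstep orbCA; congr (_ || (_ || _)).
apply/andP/andP => [[hd /eqP->]|[he /eqP->]]; by rewrite ?EH_alpha ?alphaK.
Qed.

Lemma O_step d e : d \in Op -> hstep alpha sigma EH d e -> e \in Op.
Proof. by rewrite !inE => hd he; apply: connect_trans hd (connect1 he). Qed.

Lemma O_closed : closed (hstep alpha sigma EH) Op.
Proof.
apply: (intro_closed (sym_connect_sym hstep_sym)) => x y hxy hx.
exact: O_step hx hxy.
Qed.

Lemma O_ph d : (ph d \in Op) = (d \in Op).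
Proof. by apply/esym/O_closed; rewrite /hstep eqxx. Qed.

Lemma O_alpha' d : (alpha' d \in Op) = (d \in Op).
Proof.
rewrite /alpha'; case: ifPn => // h; apply/esym/O_closed.
by rewrite /hstep h eqxx !orbT.
Qed.

Lemma O_psi d : (psi d \in Op) = (d \in Op).
Proof. by rewrite /psi O_ph O_alpha'. Qed.

Lemma O_face d : same_face alpha sigma o d -> d \in Op.
Proof.
move=> h; rewrite inE /same_Hface; apply: (connect_sub _ h) => x y /eqP <-.
by apply: connect1; rewrite /hstep eqxx.
Qed.

Lemma refl_uniq d1 d2 : reflex d1 -> reflex d2 -> tail d1 = tail d2 -> d1 = d2.
Proof.
move=> r1 r2 e; have /cards1P[x hx] : #|[set d | (tail d == tail d1) & reflex d]| == 1 by rewrite pt3.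
have : d1 \in [set d | (tail d == tail d1) & reflex d] by rewrite inE eqxx r1.
have : d2 \in [set d | (tail d == tail d1) & reflex d] by rewrite inE e eqxx r2.
by rewrite hx !inE => /eqP-> /eqP->.
Qed.

Lemma refl_ex v : exists d, (tail d = v) /\ reflex d.
Proof.
have /card_gt0P[d] : 0 < #|[set d | (tail d == v) & reflex d]| by rewrite pt3.
by rewrite inE => /andP[/eqP h r]; exists d.
Qed.

Lemma cardV : #|V| = #|[set d | reflex d]|.
Proof.
rewrite -(card_in_imset (f := tail)); last first.
  by move=> x y; rewrite !inE => rx ry; apply: refl_uniq.
rewrite -cardsT; apply: eq_card => v; rewrite inE; apply/esym/imsetP.
by have [d [<- r]] := refl_ex v; exists d; rewrite ?inE.
Qed.


Definition Ip : pred D := [predC Op].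

Lemma I_face r : r \in Ip -> ~~ same_face alpha sigma o r.
Proof. by rewrite inE; apply: contra; apply: O_face. Qed.

Lemma closedO : fclosed ph Op.
Proof. by move=> x y /eqP <-; rewrite O_ph. Qed.
Lemma closedI : fclosed ph Ip.
Proof. exact: predC_closed closedO. Qed.
Lemma closedOa : fclosed alpha' Op.
Proof. by move=> x y /eqP <-; rewrite O_alpha'. Qed.
Lemma closedOpsi : fclosed psi Op.
Proof. by move=> x y /eqP <-; rewrite O_psi. Qed.

Lemma orb3 r : r \in Ip -> #|[predI fconnect ph r & predC reflex]| = 3.
Proof.
move=> rI; rewrite -(pt1 (I_face rI)); apply: eq_card => e.
by rewrite !inE.
Qed.

Lemma cntI3 : #|[predI Ip & predC reflex]| = 3 * fcard ph Ip.
Proof.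
rewrite (SR ph_inj _ closedI) (eq_bigr (fun _ => 3)); last first.
  by move=> r /andP[_ rI]; apply: orb3.
by rewrite sum_nat_const mulnC.
Qed.

Lemma cntIQ : #|[predI Ip & reflex]| <= fcard ph Ip.
Proof.
rewrite (SR ph_inj _ closedI) /n_comp_mem -sum1_card; apply: leq_sum => r /andP[_ rI].
have h1 := cardID reflex (fconnect ph r).
have h2 : #|[predD fconnect ph r & reflex]| = 3.
  by rewrite -(orb3 rI); apply: eq_card => e; rewrite !inE andbC.
have h3 : #|fconnect ph r| <= 4.
  have := sz (I_face rI); rewrite /fingraph.order.
  by case/orP=> /eqP ->.
move: h3; rewrite -h1 h2 => h3.
have e4 : 4 = 1 + 3 by [].
by rewrite e4 leq_add2r in h3.
Qed.

Lemma splitF : fcard ph D = fcard ph Op + fcard ph Ip.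
Proof. exact: n_compC. Qed.

Lemma splitD : #|D| = #|Op| + #|Ip|.
Proof. by rewrite -(cardC Op). Qed.

Lemma splitI : #|Ip| = #|[predI Ip & reflex]| + #|[predI Ip & predC reflex]|.
Proof.
rewrite -(cardID reflex Ip); congr (_ + _); apply: eq_card => e; by rewrite !inE andbC.
Qed.

Lemma cntA : #|Op| + #|[predI Op & mem EH]| = 2 * fcard alpha' Op.
Proof.
have e1 : #|Op| = #|[predI Op & predT]| by apply: eq_card => e; rewrite !inE andbT.
rewrite e1 !(SR alpha'_inj _ closedOa) -big_split /=.
rewrite (eq_bigr (fun _ => 2)); last first.
  move=> r _.
have hc := fun y => orbit_inv y (alpha'K r).
case hr: (r \in EH).
  have ar : alpha' r = r by rewrite /alpha' hr.
  rewrite (@eq_card1 _ r) ?(@eq_card1 _ r) // => y; rewrite !inE /= hc ar orbb.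
    by case: eqP => // ->; rewrite hr.
  by rewrite andbT.
have ar : alpha' r = alpha r by rewrite /alpha' hr.
rewrite (eq_card (B := pred2 r (alpha r))); last first.
  by move=> y; rewrite !inE /= hc ar andbT.
rewrite card2 eq_sym alpha_neq (eq_card0 (A := [predI _ & _])) // => y.
rewrite !inE /= hc ar; apply/negbTE; apply/negP => /andP[/orP[] /eqP-> ].
  by rewrite hr.
by rewrite EH_alpha hr.
by rewrite sum_nat_const mulnC.
Qed.

Lemma cntD : #|D| = 2 * fcard alpha D.
Proof.
have clT : fclosed alpha (predT : pred D) by [].
have e1 : #|D| = #|[predI (predT : pred D) & (predT : pred D)]| by apply: eq_card => x; rewrite !inE.
rewrite e1 (SR alpha_inj _ clT).
have -> : fcard alpha D = #|[predI froots alpha & predT]| by rewrite /n_comp_mem; apply: eq_card => x; rewrite !inE.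
rewrite (eq_bigr (fun _ => 2)); last first.
  move=> r _.
rewrite (eq_card (B := pred2 r (alpha r))); last first.
  by move=> y; rewrite !inE /= andbT (orbit_inv _ (alphaK r)).
by rewrite card2 eq_sym alpha_neq.
by rewrite sum_nat_const mulnC.
Qed.


Lemma clO_ph x : x \in Op -> ph x \in Op. Proof. by rewrite O_ph. Qed.
Lemma clO_a x : x \in Op -> alpha' x \in Op. Proof. by rewrite O_alpha'. Qed.

Definition pa := rperm ph_inj clO_ph.
Definition pb := rperm alpha'_inj clO_a.

Lemma pbK z : pb (pb z) = z.
Proof. by apply: val_inj; rewrite !rpermE alpha'K. Qed.

Lemma pbaE z : val ((pb * pa)%g z) = psi (val z).
Proof. by rewrite permM !rpermE. Qed.

Lemma ptrans_pab : ptrans pa pb.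
Proof.
move=> S cla clb.
case: (set_0Vmem S) => [->|[z0 z0S]]; first by left.
right; apply/setP=> x; rewrite inE.
pose P : pred D := [pred d | [exists z in S, val z == d]].
have step : forall d e, hstep alpha sigma EH d e -> d \in P -> e \in P.
  move=> d e hde /existsP[z /andP[zS /eqP vz]].
  apply/existsP; move: hde; rewrite /hstep.
  case/or3P => [/eqP->|/eqP hd|/andP[hd /eqP->]].
  - by exists (pa z); rewrite cla // rpermE vz eqxx.
  - have he : e \in Op by rewrite -O_ph -hd -vz (valP z).
    pose w : {x : D | x \in Op} := exist _ e he.
    have pw : pa w = z by apply: val_inj; rewrite rpermE vz hd.
    exists w; rewrite eqxx andbT.
    apply: (subsetP (closed_porbit cla zS)).
    by rewrite porbit_sym -pw -{1}(expg1 pa) mem_porbit.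
  - exists (pb z); rewrite clb // rpermE vz /alpha'.
    by rewrite (negbTE hd) eqxx.
have clP : closed (hstep alpha sigma EH) P.
  apply: (intro_closed (sym_connect_sym hstep_sym)) => d e hde hd.
  exact: step hde hd.
have hc : connect (hstep alpha sigma EH) (val z0) (val x).
  apply: connect_trans (valP x).
  by rewrite (sym_connect_sym hstep_sym); apply: (valP z0).
have : val z0 \in P by apply/existsP; exists z0; rewrite z0S eqxx.
rewrite (closed_connect clP hc) => /existsP[z /andP[zS /eqP /val_inj <-]] //.
Qed.

Lemma G_app : fcard ph Op + fcard alpha' Op + fcard psi Op <= #|Op| + 2.
Proof.
have := G_le pbK ptrans_pab.
rewrite (porbits_fcard ph_inj closedO (rpermE ph_inj clO_ph)).
rewrite (porbits_fcard alpha'_inj closedOa (rpermE alpha'_inj clO_a)).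
rewrite (porbits_fcard psi_inj closedOpsi pbaE).
by rewrite card_sig.
Qed.


Definition Tp := [set d | reflex d & (d \in Op) && (tail d \in VH)].
Definition Up := [set d | reflex d & (d \in Op) && (tail d \notin VH)].

Lemma splitR : #|[set d | reflex d]| = #|Tp| + #|Up| + #|[predI Ip & reflex]|.
Proof.
rewrite -(cardID (mem Op) [set d | reflex d]).
have h2 : #|[predD [set d | reflex d] & mem Op]| = #|[predI Ip & reflex]|.
  by apply: eq_card => d; rewrite !inE andbC.
have h1 : #|[predI [set d | reflex d] & mem Op]| = #|Tp| + #|Up|.
  rewrite -(cardID [pred d | tail d \in VH] [predI [set d | reflex d] & mem Op]).
  have h3 : #|[predI [predI [set d | reflex d] & mem Op] & [pred d | tail d \in VH]]| = #|Tp|.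
    by apply: eq_card => d; rewrite !inE /= andbA.
  have h4 : #|[predD [predI [set d | reflex d] & mem Op] & [pred d | tail d \in VH]]| = #|Up|.
    by apply: eq_card => d; rewrite !inE /=; case: (tail d \in VH); case: (reflex d); case: (same_Hface _ _ _ _ _).
  by rewrite h3 h4.
by rewrite h1 h2.
Qed.

Lemma tauE : #|[set v in VH | reflex_in_outer_H tail alpha sigma reflex o EH v]| = #|Tp|.
Proof.
rewrite -(card_in_imset (f := tail) (D := Tp)); last first.
  move=> x y; rewrite !inE => /andP[rx _] /andP[ry _]; exact: refl_uniq.
apply: eq_card => v; rewrite !inE; apply/andP/imsetP.
  case=> vH /existsP[d /and3P[/eqP tv rd dO]]; exists d => //.
  by rewrite inE rd inE dO tv vH.
case=> d; rewrite inE => /andP[rd /andP[dO dV]] ->; split=> //.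
by apply/existsP; exists d; rewrite eqxx rd.
Qed.


Lemma tail_sigma w : tail (sigma w) = tail w.
Proof. by apply/esym/eqP; rewrite -sig_conn fconnect1. Qed.

Lemma NX z e : z \in Op -> e \in EH -> tail z = tail e ->
  exists d, [/\ d \in Op, d \in EH & tail d = tail z].
Proof.
move=> zO eE tze.
have ex : exists n, iter n sigma z \in EH.
  have : fconnect sigma z e by rewrite sig_conn tze.
  by move/iter_findex => h; exists (findex sigma z e); rewrite h.
case: (ex_minnP ex) => m hm minm.
have hO : forall i, i <= m -> iter i sigma z \in Op.
  elim=> [|i IH] him //=.
  have hi : iter i sigma z \notin EH.
    by apply/negP => h; have := minm _ h; rewrite leqNgt him.
  rewrite sigmaE O_ph; apply: (O_step (IH (ltnW him))).
  by rewrite /hstep hi eqxx !orbT.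
exists (iter m sigma z); split => //; first exact: hO.
by apply/esym/eqP; rewrite -sig_conn fconnect_iter.
Qed.

Lemma tail_inv x y : tail x \notin VH -> fconnect psi x y -> tail y = tail x.
Proof.
move=> hx /iter_findex <-; elim: (findex psi x y) => [|n IH] //=.
have hn : iter n psi x \notin EH.
  by apply: contra hx => /EH_VH; rewrite IH.
by rewrite /psi /alpha' (negbTE hn) -sigmaE tail_sigma.
Qed.

Lemma cards3 (d0 d1 d2 : D) : d0 != d1 -> d0 != d2 -> d1 != d2 -> #|[set d0; d1; d2]| = 3.
Proof.
move=> h01 h02 h12; rewrite -setUA cardsU1 cards2 h12 !inE negb_or h01 h02.
by [].
Qed.

Lemma caseA d0 : d0 \in Op -> d0 \in EH -> alpha d0 \notin Op ->
  3 <= #|[predI Op & mem EH]| /\ #|Up| + 1 <= fcard psi Op.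
Proof.
move=> d0O d0E ad0.
have tph d : tail (ph d) = tail (alpha d) by rewrite /phi tail_sigma.
have g1 : ph d0 \in Op by rewrite O_ph.
have g2 : alpha d0 \in EH by rewrite EH_alpha.
have [d1 [d1O d1E td1]] := NX g1 g2 (tph d0).
have g3 : ph d1 \in Op by rewrite O_ph.
have g4 : alpha d1 \in EH by rewrite EH_alpha.
have [d2 [d2O d2E td2]] := NX g3 g4 (tph d1).
rewrite tph in td1; rewrite tph in td2.
split.
  have h01 : d0 != d1 by apply: contraNneq (simp1 d0) => e01; rewrite -td1 -e01.
  have h12 : d1 != d2 by apply: contraNneq (simp1 d1) => e12; rewrite -td2 -e12.
  have h02 : d0 != d2.
    apply/negP => /eqP e02.
    have : d1 = alpha d0 by apply: simp2; rewrite ?alphaK // -td2 -e02.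
    by move=> e; move: d1O; rewrite e (negbTE ad0).
  rewrite -(cards3 h01 h02 h12); apply: subset_leq_card; apply/subsetP => x.
  by rewrite !inE => hx; apply/andP; split; move: hx => /orP[/orP[]|] /eqP->.
rewrite (CLS psi_inj closedOpsi).
pose cls d := [set y | fconnect psi d y].
have d0U : d0 \notin Up by rewrite inE (EH_VH d0E) !andbF.
have fs := fconnect_sym psi_inj.
have hinj : {in d0 |: Up &, injective cls}.
  have key : forall x y, x \in Up -> cls x = cls y -> fconnect psi x y.
    by move=> x y _ /setP /(_ y); rewrite !inE connect0 => ->.
  move=> x y /setU1P[->|xU] /setU1P[->|yU] // e.
  - have : fconnect psi y d0 by apply: key; rewrite ?e.
    move/(tail_inv _); move: yU; rewrite inE => /and3P[_ _ yV] /(_ yV) tl.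
    by move: yV; rewrite -tl (EH_VH d0E).
  - have : fconnect psi x d0 by apply: key.
    move/(tail_inv _); move: xU; rewrite inE => /and3P[_ _ xV] /(_ xV) tl.
    by move: xV; rewrite -tl (EH_VH d0E).
  - have hxy := key _ _ xU e.
    move: xU yU; rewrite !inE => /and3P[rx _ xV] /and3P[ry _ _].
    by apply: refl_uniq => //; apply/esym/tail_inv.
have := card_in_imset hinj; rewrite cardsU1 d0U add1n addn1 => <-.
apply: subset_leq_card; apply/subsetP => S /imsetP[x hx ->]; apply/imsetP; exists x => //.
by move: hx; rewrite !inE => /orP[/eqP->|/and3P[]].
Qed.

Lemma caseB : (forall d, d \in Op -> d \in EH -> alpha d \in Op) ->
  #|[set v in VH | reflex_in_outer_H tail alpha sigma reflex o EH v]| = #|VH|.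
Proof.
move=> H0.
have Oa : forall d, d \in Op -> alpha d \in Op.
  move=> d dO; case hd: (d \in EH); first exact: H0.
  by apply: (O_step dO); rewrite /hstep hd eqxx !orbT.
have Os : forall d, d \in Op -> sigma d \in Op.
  by move=> d dO; rewrite sigmaE O_ph Oa.
have clS : fclosed sigma Op.
  move=> x y /eqP <-; apply/idP/idP; first exact: Os.
  by rewrite sigmaE O_ph => /Oa; rewrite alphaK.
have vert : forall d e, d \in Op -> tail d = tail e -> e \in Op.
  move=> d e dO tde; have h : fconnect sigma d e by rewrite sig_conn tde.
  by rewrite -(closed_connect clS h).
have all : forall d, d \in Op.
  move=> d; have /connectP[p hp hl] := adj_conn (tail o) (tail d).
  have oO : o \in Op by rewrite inE /same_Hface connect0.
  suff : forall p x, path (adj tail alpha) (tail x) p -> x \in Op ->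
           forall e, tail e = last (tail x) p -> e \in Op.
    by move/(_ p o hp oO d hl).
  elim=> [|v q IH] x /=; first by move=> _ xO e te; apply: vert xO _; rewrite te.
  case/andP=> /existsP[c /andP[/eqP tc /eqP tac]] hq xO.
  have cO : c \in Op by apply: vert xO _.
  have acO := Oa _ cO.
  by move: hq; rewrite -tac => hq e he; apply: (IH _ hq acO).
apply: eq_card => v; rewrite !inE; case vH: (v \in VH) => //=.
have [d [td rd]] := refl_ex v; apply/existsP; exists d.
by rewrite td eqxx rd; have := all d; rewrite inE.
Qed.


Lemma main3 : 3 <= #|[set v in VH | reflex_in_outer_H tail alpha sigma reflex o EH v]|.
Proof.
case: (pickP [pred d | (d \in Op) && (d \in EH) && (alpha d \notin Op)]) =>
   [d0 /= /andP[/andP[d0O d0E] ad0] | hn]; last first.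
  rewrite caseB // => d dO dE; move: (hn d) => /=; rewrite dO dE /=.
  by move/negbFE.
have [h3 hc] := caseA d0O d0E ad0.
rewrite tauE.
have eu := euler.
rewrite splitF cntD mul2n doubleK in eu.
apply: (arith eu (Logic.eq_refl (2 * fcard alpha D)) _ splitI cntI3 cntIQ cntA G_app _ hc h3).
  by rewrite -cntD splitD.
by rewrite cardV splitR.
Qed.

End Main.

Theorem lemma1 (D V : finType) (tail : D -> V) (alpha sigma : D -> D)
    (reflex : pred D) (o : D) (VH : {set V}) (EH : {set D}) :
  comb_4PPT tail alpha sigma reflex o ->
  subgraph tail alpha VH EH ->
  3 <= #|VH| ->
  3 <= #|[set v in VH | reflex_in_outer_H tail alpha sigma reflex o EH v]|.
Proof.
case=> [[[sinj aK] aneq sconn tsurj [aconn eul]] [s1 s2] [p1 p2 p3] psz] hsub h3.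
exact: (main3 sinj aK aneq sconn aconn eul s1 s2 p1 p3 psz hsub h3).
Qed.
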